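(* Let $n\ge1$ and let $A:\mathbb{Z}^n\to\mathbb{C}$ be a function with $T'_{l_i,l_{i+1}}A(l_1,\ldots,l_n)=0$ for all $i$ with $1\le i<n$. Then $$T'_{k_i,k_{i+1}}\left(\sum_{(l_1,\ldots,l_n)}^{(k_1,\ldots,k_{n+1})}A(l_1,\ldots,l_n)\right)(k_1,\ldots,k_{n+1})=0$$ for all $i$ with $1\le i\le n$.
   Context: Extended interval sums: $\sum_{i=a}^b F(i)=F(a)+\cdots+F(b)$ if $a\le b$, $=0$ if $b=a-1$, and $=-F(b+1)-\cdots-F(a-1)$ if $b+1\le a-1$. For functions $A$ on $\mathbb{Z}^{m-1}$ and $(k_1,\ldots,k_m)\in\mathbb{Z}^m$ define recursively $\sum_{(l_1)}^{(k_1,k_2)}A(l_1)=\sum_{l_1=k_1}^{k_2}A(l_1)$ and, for $m>2$, $$\sum_{(l_1,\ldots,l_{m-1})}^{(k_1,\ldots,k_m)}A=\sum_{(l_1,\ldots,l_{m-2})}^{(k_1,\ldots,k_{m-1})}\sum_{l_{m-1}=k_{m-1}+1}^{k_m}A(l_1,\ldots,l_{m-1})+\sum_{(l_1,\ldots,l_{m-2})}^{(k_1,\ldots,k_{m-1}-1)}A(l_1,\ldots,l_{m-2},k_{m-1}).$$ For variables $x,y$: $E_x$ is the shift $E_xF(x)=F(x+1)$ (other variables fixed), $\Delta_x=E_x-\operatorname{id}$, $S_{x,y}$ swaps $x$ and $y$, and $T'_{x,y}=(\operatorname{id}+S_{x,y})(\operatorname{id}+E_y\Delta_x)$; products of operators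 are compositions. *)

(* Defs.v *)
From HB Require Import structures.
From mathcomp Require Import all_boot all_order all_algebra.
From mathcomp Require Import complex reals.
Set Implicit Arguments. Unset Strict Implicit. Unset Printing Implicit Defensive.
Import Order.TTheory GRing.Theory Num.Theory.
Local Open Scope ring_scope.

(* Points of Z^m are represented as lists of integers of size m;
   coordinate x_1,...,x_m is stored at (0-based) position 0,...,m-1. *)

Section Defs.
Variable V : zmodType.

Definition isum (a b : int) (F : int -> V) : V :=
  if a <= b then \sum_(0 <= j < (absz (b - a + 1)%R)) F (a + j%:Z)
  else - \sum_(0 <= j < (absz (a - 1 - b)%R)) F (b + 1 + j%:Z).

(* msum m k A = \sum_{(l_1,..,l_m)}^{(k_1,..,k_{m+1})} A(l_1,..,l_m),
   for k of size m+1 and A a function on lists of size m. *)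
Fixpoint msum (m : nat) (k : seq int) (A : seq int -> V) {struct m} : V :=
  match m with
  | 0%N => 0
  | 1%N => isum (nth 0 k 0) (nth 0 k 1) (fun l1 => A [:: l1])
  | (m'.+1) as m1 =>
      (* here m1 = m'+1 >= 2: k = (k_1,...,k_{m1+1}),
         k_{m1} sits at index m', k_{m1+1} at index m1 *)
      msum m' (take m1 k)
        (fun l => isum (nth 0 k m' + 1) (nth 0 k m1) (fun x => A (rcons l x)))
      + msum m' (rcons (take m' k) (nth 0 k m' - 1))
        (fun l => A (rcons l (nth 0 k m')))
  end.

Definition Eop (x : nat) (F : seq int -> V) : seq int -> V :=
  fun l => F (set_nth 0 l x (nth 0 l x + 1)).

Definition Dop (x : nat) (F : seq int -> V) : seq int -> V :=
  fun l => Eop x F l - F l.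

Definition swapl (x y : nat) (l : seq int) : seq int :=
  set_nth 0 (set_nth 0 l x (nth 0 l y)) y (nth 0 l x).

Definition Sop (x y : nat) (F : seq int -> V) : seq int -> V :=
  fun l => F (swapl x y l).

Definition Tp (x y : nat) (F : seq int -> V) : seq int -> V :=
  let H := fun l => F l + Eop y (Dop x F) l in
  fun l => H l + Sop x y H l.

End Defs.

(* Main.v *)
Require Import Defs.
From HB Require Import structures.
From mathcomp Require Import all_boot all_order all_algebra.
From mathcomp Require Import complex reals.
From mathcomp Require Import ring zify.
Import Order.TTheory GRing.Theory Num.Theory.
Local Open Scope ring_scope.

Set Implicit Arguments. Unset Strict Implicit. Unset Printing Implicit Defensive.

Section Isum.
Variable V : zmodType.
Implicit Types (F : int -> V) (a b c : int).

Lemma int_ind2 (P : int -> Prop) (c : int) :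
  P c -> (forall x, P x -> P (x + 1)) -> (forall x, P (x + 1) -> P x) ->
  forall x, P x.
Proof.
move=> Pc Hu Hd x.
have [[n ->]|[n ->]] : (exists n : nat, x = c + n%:Z) \/ (exists n : nat, x = c - n%:Z).
  case: (lerP c x) => h.
    left; exists (absz (x - c)); rewrite gez0_abs ?subr_ge0 //; ring.
  right; exists (absz (c - x)); rewrite gez0_abs ?subr_ge0 ?ltW //; ring.
- elim: n => [|n IH]; first by rewrite addr0.
  have -> : c + n.+1%:Z = (c + n%:Z) + 1 by rewrite -addn1 PoszD addrA.
  exact: Hu.
- elim: n => [|n IH]; first by rewrite subr0.
  apply: Hd.
  have -> : c - n.+1%:Z + 1 = c - n%:Z by rewrite -addn1 PoszD; ring.
  exact: IH.
Qed.


Lemma isumE_pos a (n : nat) F :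
  isum a (a + n%:Z - 1) F = \sum_(0 <= j < n) F (a + j%:Z).
Proof.
rewrite /isum; case: ifP => h.
  have -> : absz (a + n%:Z - 1 - a + 1)%R = n by lia.
  by [].
have -> : n = 0%N by lia.
have -> : absz (a - 1 - (a + 0%:Z - 1))%R = 0%N by lia.
by rewrite !big_geq ?oppr0.
Qed.

Lemma isumE_neg a (n : nat) F :
  isum a (a - n%:Z - 1) F = - \sum_(0 <= j < n) F (a - n%:Z + j%:Z).
Proof.
rewrite /isum; case: ifP => h.
  have -> : n = 0%N by lia.
  have -> : absz (a - 0%:Z - 1 - a + 1)%R = 0%N by lia.
  by rewrite !big_geq ?oppr0.
have -> : absz (a - 1 - (a - n%:Z - 1))%R = n by lia.
apply: congr1; apply: eq_bigr => j _; congr F; lia.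
Qed.

Lemma isum_recr a b F : isum a (b + 1) F = isum a b F + F (b + 1).
Proof.
case: (lerP (a - 1) b) => h.
  have [n en] : exists n : nat, b = a + n%:Z - 1 by exists (absz (b - a + 1)%R); lia.
  have -> : b + 1 = a + n.+1%:Z - 1 by lia.
  rewrite en !isumE_pos big_nat_recr //=; congr (_ + F _); lia.
have [n en] : exists n : nat, b = a - n.+1%:Z - 1 by exists (absz (a - 2 - b)%R); lia.
have -> : b + 1 = a - n%:Z - 1 by lia.
rewrite en !isumE_neg big_nat_recl // opprD.
have -> : F (a - n.+1%:Z + 0%:Z) = F (a - n%:Z - 1) by congr F; lia.
rewrite addrAC addNr add0r; congr (- _); apply: eq_bigr => j _; congr F; lia.
Qed.

Lemma isum_nil a F : isum a (a - 1) F = 0.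
Proof. by have := isumE_pos a 0 F; rewrite addr0 big_geq. Qed.


Lemma isum_uniq (S T : int -> V) c F :
  (forall b, S (b + 1) = S b + F (b + 1)) ->
  (forall b, T (b + 1) = T b + F (b + 1)) ->
  S c = T c -> forall b, S b = T b.
Proof.
move=> hS hT hc; apply: (int_ind2 hc) => x.
  by rewrite hS hT => ->.
by rewrite hS hT => /addIr.
Qed.

Lemma isum_eq a b F G : (forall x, F x = G x) -> isum a b F = isum a b G.
Proof.
move=> e; apply: (@isum_uniq (fun b => isum a b F) (fun b => isum a b G) (a - 1) F).
- by move=> x; rewrite isum_recr.
- by move=> x; rewrite isum_recr e.
- by rewrite !isum_nil.
Qed.

Lemma isumD a b F G : isum a b (fun x => F x + G x) = isum a b F + isum a b G.
Proof.
apply: (@isum_uniq (fun b => isum a b _) (fun b => isum a b F + isum a b G) (a - 1)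
   (fun x => F x + G x)) => [x|x|]; rewrite ?isum_recr ?isum_nil ?addr0 //.
by rewrite addrACA.
Qed.

Lemma isumN a b F : isum a b (fun x => - F x) = - isum a b F.
Proof.
apply: (@isum_uniq (fun b => isum a b _) (fun b => - isum a b F) (a - 1)
   (fun x => - F x)) => [x|x|]; rewrite ?isum_recr ?isum_nil ?oppr0 //.
by rewrite opprD.
Qed.

Lemma isumB a b F G : isum a b (fun x => F x - G x) = isum a b F - isum a b G.
Proof. by rewrite isumD isumN. Qed.

Lemma isum0 a b : isum a b (fun _ => 0 : V) = 0.
Proof.
apply: (@isum_uniq (fun b => isum a b _) (fun b => 0) (a - 1) (fun _ => 0))
  => [x|x|]; by rewrite ?isum_recr ?isum_nil ?addr0.
Qed.

Lemma isum_recr' a b F : isum a b F = isum a (b - 1) F + F b.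
Proof. by rewrite -{1 3}(subrK 1 b) isum_recr. Qed.

Lemma isum_split a c b F : isum a b F = isum a c F + isum (c + 1) b F.
Proof.
apply: (@isum_uniq (fun b => isum a b F) (fun b => isum a c F + isum (c + 1) b F) c F)
  => [x|x|]; rewrite ?isum_recr ?addrA //.
have -> : isum (c + 1) c F = 0 by rewrite -{2}(addrK 1 c) isum_nil.
by rewrite addr0.
Qed.

Lemma isum1 a F : isum a a F = F a.
Proof. by rewrite isum_recr' isum_nil add0r. Qed.

Lemma isum_recl a b F : isum a b F = F a + isum (a + 1) b F.
Proof. by rewrite (isum_split a a) isum1. Qed.

Lemma isum_prim a b F : isum a b F = isum 0 b F - isum 0 (a - 1) F.
Proof. by rewrite (isum_split 0 (a - 1)) subrK addrC addKr. Qed.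

Lemma isum_shift a b F : isum a b (fun x => F (x + 1)) = isum (a + 1) (b + 1) F.
Proof.
apply: (@isum_uniq (fun b => isum a b _) (fun b => isum (a + 1) (b + 1) F) (a - 1)
   (fun x => F (x + 1))) => [x|x|]; first (by rewrite isum_recr); first (by rewrite isum_recr).
by rewrite isum_nil subrK -{2}(addrK 1 a) isum_nil.
Qed.

Lemma isum_swap a b c d (W : int -> int -> V) :
  isum a b (fun x => isum c d (fun y => W y x)) =
  isum c d (fun y => isum a b (fun x => W y x)).
Proof.
apply: (@isum_uniq (fun b => isum a b _) (fun b => isum c d (fun y => isum a b (W y)))
   (a - 1) (fun x => isum c d (fun y => W y x))) => [x|x|].
- by rewrite isum_recr.
- rewrite (@isum_eq c d _ (fun y => isum a x (W y) + W y (x + 1))) ?isumD //.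
  by move=> y; rewrite isum_recr.
- rewrite isum_nil (@isum_eq c d _ (fun _ => 0)) ?isum0 //.
  by move=> y; rewrite isum_nil.
Qed.

End Isum.

Section Prim.
Variable C : comRingType.
Variable H : int -> int -> C.

Definition prim2 (y x : int) := isum 0 x (fun x' => isum 0 y (fun y' => H y' x')).

Lemma P1col y x : isum 0 y (fun y' => H y' x) = prim2 y x - prim2 y (x - 1).
Proof. by rewrite /prim2 (isum_recr' 0 x) addrC addKr. Qed.

Lemma pt y x : H y x = prim2 y x - prim2 (y - 1) x - prim2 y (x - 1) + prim2 (y - 1) (x - 1).
Proof.
have -> : H y x = isum 0 y (fun y' => H y' x) - isum 0 (y - 1) (fun y' => H y' x).
  by rewrite (isum_recr' 0 y) addrC addKr.
rewrite !P1col; ring.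
Qed.

Lemma liney m n x0 : isum m n (fun y => H y x0) =
  prim2 n x0 - prim2 n (x0 - 1) - prim2 (m - 1) x0 + prim2 (m - 1) (x0 - 1).
Proof. rewrite isum_prim !P1col; ring. Qed.

Lemma box_xy m n m' n' : isum m n (fun x => isum m' n' (fun y => H y x)) =
  prim2 n' n - prim2 (m' - 1) n - prim2 n' (m - 1) + prim2 (m' - 1) (m - 1).
Proof.
rewrite (@isum_eq _ m n _ (fun x => isum 0 n' (fun y => H y x) - isum 0 (m' - 1) (fun y => H y x))).
  by rewrite isumB !(isum_prim m n) /prim2; ring.
by move=> x; rewrite isum_prim.
Qed.

Lemma linex m n y0 : isum m n (fun x => H y0 x) =
  prim2 y0 n - prim2 (y0 - 1) n - prim2 y0 (m - 1) + prim2 (y0 - 1) (m - 1).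
Proof.
rewrite -box_xy; apply: isum_eq => x; by rewrite isum1.
Qed.

Lemma box_yx m n m' n' : isum m n (fun y => isum m' n' (fun x => H y x)) =
  prim2 n n' - prim2 (m - 1) n' - prim2 n (m' - 1) + prim2 (m - 1) (m' - 1).
Proof. by rewrite -isum_swap box_xy. Qed.

End Prim.

Lemma shiftL (V : zmodType) (H : int -> int -> V) m n y0 :
  isum m n (fun t => H (t + 1) y0) = isum (m + 1) (n + 1) (fun t => H t y0).
Proof. exact: (isum_shift m n (fun t => H t y0)). Qed.
Lemma shiftR (V : zmodType) (H : int -> int -> V) m n y0 :
  isum m n (fun t => H y0 (t + 1)) = isum (m + 1) (n + 1) (fun t => H y0 t).
Proof. exact: (isum_shift m n (fun t => H y0 t)). Qed.
Lemma shiftL' (V : zmodType) (H : int -> int -> V) m n y0 :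
  isum m n (fun t => H (t - 1) y0) = isum (m - 1) (n - 1) (fun t => H t y0).
Proof.
transitivity (isum (m - 1 + 1) (n - 1 + 1) (fun t => H (t - 1) y0)); first by rewrite !subrK.
rewrite -(shiftL (fun u v => H (u - 1) v)); apply: isum_eq => t; by rewrite addrK.
Qed.
Lemma shiftR' (V : zmodType) (H : int -> int -> V) m n y0 :
  isum m n (fun t => H y0 (t - 1)) = isum (m - 1) (n - 1) (fun t => H y0 t).
Proof.
transitivity (isum (m - 1 + 1) (n - 1 + 1) (fun t => H y0 (t - 1))); first by rewrite !subrK.
rewrite -(shiftR (fun u v => H u (v - 1))); apply: isum_eq => t; by rewrite addrK.
Qed.

Lemma prim2B (C : comRingType) (H1 H2 : int -> int -> C) y x :
  prim2 (fun y x => H1 y x - H2 y x) y x = prim2 H1 y x - prim2 H2 y x.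
Proof.
rewrite /prim2 -isumB; apply: isum_eq => x'; by rewrite isumB.
Qed.

Ltac splitsums := rewrite ?(isumD, isumN).
Ltac conv := rewrite ?(shiftL, shiftR, shiftL', shiftR'); rewrite ?box_xy ?linex ?liney ?prim2B.
Ltac normz := rewrite ?addrK ?subrK.

Section AS.
Variable C : numFieldType.
Definition G (f : int -> int -> C) u v := f u v + f (u + 1) (v + 1) - f u (v + 1).
Definition AS (f : int -> int -> C) := forall u v, G f u v + G f v u = 0.

Lemma AS_diag f : AS f -> forall c, f c c + f (c + 1) (c + 1) - f c (c + 1) = 0.
Proof.
move=> h c; have := h c c; rewrite /G -mulr2n => /eqP.
by rewrite mulrn_eq0 /= => /eqP.
Qed.

Lemma LineRel f : AS f -> forall m n c,
  isum m n (fun t => f t c) + isum (m + 1) (n + 1) (fun t => f (c + 1) t)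
  + f (n + 1) (c + 1) - f m (c + 1) + f c m - f c (n + 1) = 0.
Proof.
move=> h m n c.
have := @isum_eq _ m n (fun t => G f t c + G f c t) (fun _ => 0) (fun t => h t c).
rewrite isum0 /G => e; rewrite -e; move: e => _.
splitsums; conv; rewrite !(pt f); normz; ring.
Qed.
End AS.

Section LP.
Variable C : numFieldType.
Implicit Types D : int -> int -> C.

Definition S D a b := isum (a + 1) b (fun x => D a x) + D (a - 1) a.
Definition dif D c x := D c x - D (c - 1) x.

Lemma eq_lin (x y e : C) : e = 0 -> x - y - e = 0 -> x = y.
Proof. by move=> -> /eqP; rewrite subr0 subr_eq0 => /eqP. Qed.
Lemma zero_lin (x e k : C) : e = 0 -> x - k * e = 0 -> x = 0.
Proof. by move=> ->; rewrite mulr0 subr0. Qed.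

Lemma diff_ind (Phi : int -> C) c :
  (forall x, Phi (x + 1) = Phi x) -> Phi c = 0 -> forall x, Phi x = 0.
Proof.
move=> h hc; apply: (int_ind2 hc) => x; by rewrite h.
Qed.

Lemma LP D : AS (dif D) -> AS (S D).
Proof.
move=> hC a.
apply: (@diff_ind (fun b => G (S D) a b + G (S D) b a) a).
  move=> b.
  apply: (eq_lin (LineRel hC (b + 1) a (b + 1))).
  apply: (zero_lin (k := -1) (AS_diag hC (b + 1))).
  rewrite /G /S /dif; splitsums; conv; rewrite ?(pt D); normz; ring.
rewrite /G /S; splitsums; conv; rewrite ?(pt D); normz; ring.
Qed.
End LP.

Section Mid.
Variable C : numFieldType.

Lemma isum_tele (F : int -> C) m n : isum m n (fun t => F t - F (t - 1)) = F n - F (m - 1).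
Proof.
apply: (@isum_uniq _ (fun n => isum m n _) (fun n => F n - F (m - 1)) (m - 1)
  (fun t => F t - F (t - 1))) => [x|x|].
- by rewrite isum_recr.
- by rewrite addrK; ring.
- by rewrite isum_nil subrr.
Qed.

Lemma const_step (Phi : int -> C) : (forall x, Phi (x + 1) = Phi x) -> forall b c, Phi b = Phi c.
Proof.
move=> h b c; apply: (@int_ind2 (fun x => Phi x = Phi c) c) => // x; by rewrite h.
Qed.

Lemma eq0 (x y : C) : x - y = 0 -> x = y.
Proof. by move/eqP; rewrite subr_eq0 => /eqP. Qed.

Lemma AS_ext (f g : int -> int -> C) : (forall u v, f u v = g u v) -> AS f -> AS g.
Proof. by move=> e h u v; rewrite /G -!e; apply: h. Qed.

Lemma AS_sub (f g : int -> int -> C) : AS f -> AS g -> AS (fun u v => f u v - g u v).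
Proof. move=> hf hg u v; have := hf u v; have := hg u v; rewrite /G => e1 e2; rewrite -[RHS](subrr 0); rewrite -{1}e2 -e1; ring. Qed.

Definition E (W : int -> int -> int -> C) p c x := S (fun c' y => W c' y x) p c.
Definition Fm (W : int -> int -> int -> C) b p a := S (fun c x => E W p c x) a b.

Variable W : int -> int -> int -> C.
Lemma ptW c y x : W c y x = prim2 (W c) y x - prim2 (W c) (y - 1) x - prim2 (W c) y (x - 1) + prim2 (W c) (y - 1) (x - 1).
Proof. exact: pt. Qed.

Lemma AS0 : AS (fun _ _ => 0 : C).
Proof. by move=> u v; rewrite /G; ring. Qed.

Ltac fin := rewrite /G /Fm /E /S /dif; rewrite ?isum_tele; splitsums; conv; normz.

Lemma Malpha (g : int -> int -> C) (hg : AS g) b :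
  AS (fun p a => Fm (fun _ y x => g y x) b p a).
Proof.
move=> p a.
pose Q b a := G (fun u v => Fm (fun _ y x => g y x) b u v) p a +
              G (fun u v => Fm (fun _ y x => g y x) b u v) a p.
have hb : forall b, Q b a = Q a a.
  move=> b0; apply: (@const_step (fun b => Q b a)) => x; apply: eq0.
  have hD : AS (dif (fun c y => g y (x + 1))).
    by apply: (AS_ext _ AS0) => u v; rewrite /dif subrr.
  apply: (zero_lin (k := 1) (LP hD p a)).
  rewrite /Q; fin; rewrite ?(pt g); normz; ring.
rewrite -/(Q b a) hb; move: a {hb}.
apply: (@diff_ind _ (fun a => Q a a) p).
  move=> a; apply: eq0.
  apply: (zero_lin (k := -1) (LineRel hg p (a - 1) a)).
  apply: (zero_lin (k := -1) (AS_diag hg a)).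
  rewrite /Q; fin; rewrite ?(pt g); normz; ring.
rewrite /Q; fin; rewrite ?(pt g); normz; ring.
Qed.

Lemma Mid (h1 : forall c, AS (W c)) (h2 : forall x, AS (dif (fun c y => W c y x))) b :
  AS (fun p a => Fm W b p a).
Proof.
have AS_U : forall z, AS (fun y x => W z y x - W (z - 1) y x).
  by move=> z; apply: AS_sub.
move=> p a.
pose w := fun c y x => W c y x - W p y x.
pose Q W' b a := G (fun u v => Fm W' b u v) p a + G (fun u v => Fm W' b u v) a p.
have e1 : Q W b a = Q (fun _ y x => W p y x) b a + Q w b a.
  rewrite /Q /w; fin; rewrite ?ptW; normz; ring.
rewrite -/(Q W b a) e1.
have -> : Q (fun _ y x => W p y x) b a = 0 by exact: (Malpha (h1 p) b p a).
rewrite add0r.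
have hb : forall b, Q w b a = Q w p a.
  move=> b0; apply: (@const_step (fun b => Q w b a)) => x; apply: eq0.
  have hD : AS (dif (fun c y => w c y (x + 1))).
    apply: (AS_ext _ (h2 (x + 1))) => u v; rewrite /dif /w; ring.
  apply: (zero_lin (k := 1) (LP hD p a)).
  rewrite /Q /w; fin; rewrite ?ptW; normz; ring.
rewrite hb; move: a {e1 hb}.
apply: (@diff_ind _ (fun a => Q w p a) p).
  move=> a; apply: eq0.
  apply: (zero_lin (k := -1) (LineRel (AS_U (p + 1)) (p + 1) a (a + 1))).
  apply: (zero_lin (k := -1) (LineRel (h2 p) (p + 1) a a)).
  apply: (zero_lin (k := -1) (AS_diag (AS_U (p + 1)) (a + 1))).
  apply: (zero_lin (k := -1) (AS_diag (h2 (a + 1 + 1)) p)).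
  apply: (zero_lin (k := 1) (AS_diag (h2 (a + 1)) p)).
  apply: (zero_lin (k := 1) (h2 (p + 1) p a)).
  apply: (zero_lin (k := -1) (h2 p p a)).
  apply: (zero_lin (k := 1) (AS_diag (AS_U a) p)).
  apply: (zero_lin (k := 1) (AS_U p p a)).
  apply: (zero_lin (k := -1) (AS_diag (AS_U (a + 1)) p)).
  apply: (zero_lin (k := -1) (h2 (p + 1) p (a + 1))).
  apply: (zero_lin (k := 1) (AS_diag (h2 p) a)).
  apply: (zero_lin (k := -1) (AS_U p p (a + 1))).
  rewrite /Q /w; fin; rewrite ?ptW; normz; ring.
apply: (zero_lin (k := -2) (AS_diag (h2 (p + 1)) p)).
apply: (zero_lin (k := -2) (AS_diag (AS_U p) p)).
rewrite /Q /w; fin; rewrite ?ptW; normz; ring.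
Qed.
End Mid.

Definition upd2 (k : seq int) i (x y : int) := set_nth 0 (set_nth 0 k i x) i.+1 y.

Lemma mxr m n : (m <= n)%N -> maxn m n = n.
Proof. by move/maxn_idPr. Qed.

Lemma size_upd2 (k : seq int) i (x y : int) : (i.+1 < size k)%N -> size (upd2 k i x y) = size k.
Proof. move=> h; rewrite /upd2 !size_set_nth (mxr (ltnW h)) mxr //. Qed.

Lemma nth_upd2 (k : seq int) i (x y : int) j : (i.+1 < size k)%N ->
  nth 0 (upd2 k i x y) j = if j == i then x else if j == i.+1 then y else nth 0 k j.
Proof.
move=> h; rewrite /upd2 nth_set_nth /= nth_set_nth /=.
case: (eqVneq j i) => [->|]; first by rewrite ltn_eqF.
by [].
Qed.

Lemma eq_nth0 (s t : seq int) : size s = size t -> (forall j, (j < size s)%N -> nth 0 s j = nth 0 t j) -> s = t.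
Proof. by move=> hs h; apply: (eq_from_nth (x0 := 0)). Qed.

Lemma upd2_upd2 (k : seq int) i (x y x' y' : int) : (i.+1 < size k)%N -> upd2 (upd2 k i x y) i x' y' = upd2 k i x' y'.
Proof.
move=> h; apply: eq_nth0; rewrite ?size_upd2 // ?size_upd2 // => j hj.
rewrite !nth_upd2 ?size_upd2 //; by case: (j == i); case: (j == i.+1).
Qed.

Lemma upd2_id (k : seq int) i : (i.+1 < size k)%N -> upd2 k i (nth 0 k i) (nth 0 k i.+1) = k.
Proof.
move=> h; apply: eq_nth0; rewrite ?size_upd2 // => j hj.
rewrite nth_upd2 //; case: (eqVneq j i) => [->//|_]; by case: (eqVneq j i.+1) => [->|].
Qed.

Lemma upd2_rcons (l : seq int) i (u v x : int) : (i.+1 < size l)%N -> rcons (upd2 l i u v) x = upd2 (rcons l x) i u v.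
Proof.
move=> h; apply: eq_nth0; rewrite ?size_rcons ?size_upd2 ?size_rcons //; try lia.
move=> j hj; rewrite nth_rcons size_upd2 // !nth_upd2 ?size_rcons; try lia.
rewrite nth_rcons.
case: (eqVneq j i) => [->|ni]; first by rewrite (ltn_trans (ltnSn i) h).
case: (eqVneq j i.+1) => [->|ni1]; first by rewrite h.
by [].
Qed.

Lemma upd2_last (k' : seq int) m (a b u v : int) : size k' = m ->
  upd2 (rcons (rcons k' a) b) m u v = rcons (rcons k' u) v.
Proof.
move=> hs; apply: eq_nth0; rewrite ?size_upd2 ?size_rcons //; try lia.
move=> j hj; rewrite nth_upd2 ?size_rcons; try lia.
rewrite !nth_rcons !size_rcons hs.
have [lt|gt|->] := ltngtP j m.
- have lt1 := ltn_trans lt (ltnSn m).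
  by rewrite ?(ltn_eqF lt) ?(ltn_eqF lt1) ?lt1 ?lt.
- have -> : j = m.+1 by move: hj; rewrite hs; lia.
  by rewrite ?(gtn_eqF (ltnSn m)) ?eqxx ?ltnn ?ltnSn.
- by rewrite ?eqxx ?ltnSn ?ltnn.
Qed.

Lemma take_upd2 (k : seq int) i n (u v : int) : (i.+1 < n)%N -> (n <= size k)%N ->
  take n (upd2 k i u v) = upd2 (take n k) i u v.
Proof.
move=> h1 h2; have h3 : (i.+1 < size k)%N by lia.
apply: eq_nth0.
  by rewrite size_takel ?size_upd2 ?size_takel //; lia.
move=> j; rewrite size_takel ?size_upd2 // => hj.
rewrite nth_take // !nth_upd2 ?size_takel // nth_take //.
Qed.

Lemma decomp2 (k : seq int) m : size k = m.+2 ->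
  k = rcons (rcons (take m k) (nth 0 k m)) (nth 0 k m.+1).
Proof.
move=> hs; rewrite -take_nth ?hs // -take_nth ?hs // take_oversize ?hs //.
Qed.

Section MS.
Variable C : numFieldType.

Fixpoint ms (m : nat) (k : seq int) (A : seq int -> C) {struct m} : C :=
  match m with
  | 0%N => A [::]
  | m'.+1 => ms m' (take m'.+1 k)
        (fun l => isum (nth 0 k m' + 1) (nth 0 k m'.+1) (fun x => A (rcons l x)))
      + ms m' (rcons (take m' k) (nth 0 k m' - 1)) (fun l => A (rcons l (nth 0 k m')))
  end.

Lemma ms_ext m k A B : (forall l, size l = m -> A l = B l) -> ms m k A = ms m k B.
Proof.
elim: m k A B => [|m IH] k A B h /=; first by rewrite h.
congr (_ + _); apply: IH => l hl.
  by apply: isum_eq => x; rewrite h // size_rcons hl.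
by rewrite h // size_rcons hl.
Qed.

Lemma ms0 m k : ms m k (fun _ => 0) = 0.
Proof.
elim: m k => [|m IH] k //=.
rewrite (@ms_ext _ _ _ (fun _ => 0)) ?IH ?addr0 // => l _; exact: isum0.
Qed.

Lemma msD m k A B : ms m k (fun l => A l + B l) = ms m k A + ms m k B.
Proof.
elim: m k A B => [|m IH] k A B //=.
rewrite (@ms_ext _ _ (fun l => isum _ _ _)
  (fun l => isum (nth 0 k m + 1) (nth 0 k m.+1) (fun x => A (rcons l x)) +
            isum (nth 0 k m + 1) (nth 0 k m.+1) (fun x => B (rcons l x)))); last first.
  by move=> l _; rewrite isumD.
rewrite !IH; ring.
Qed.

Lemma msN m k A : ms m k (fun l => - A l) = - ms m k A.
Proof.
elim: m k A => [|m IH] k A //=.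
rewrite (@ms_ext _ _ (fun l => isum _ _ _)
  (fun l => - isum (nth 0 k m + 1) (nth 0 k m.+1) (fun x => A (rcons l x)))); last first.
  by move=> l _; rewrite isumN.
rewrite !IH; ring.
Qed.

Lemma msB m k A B : ms m k (fun l => A l - B l) = ms m k A - ms m k B.
Proof. by rewrite msD msN. Qed.

Lemma ms_isum m k c d (B : seq int -> int -> C) :
  ms m k (fun l => isum c d (fun x => B l x)) = isum c d (fun x => ms m k (fun l => B l x)).
Proof.
apply: (@isum_uniq _ (fun d => ms m k (fun l => isum c d (fun x => B l x)))
  (fun d => isum c d (fun x => ms m k (fun l => B l x))) (c - 1)
  (fun x => ms m k (fun l => B l x))) => [x|x|].
- rewrite -msD; apply: ms_ext => l _; exact: isum_recr.
- exact: isum_recr.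
- rewrite isum_nil (@ms_ext _ _ _ (fun _ => 0)) ?ms0 // => l _; exact: isum_nil.
Qed.

Lemma ms_rcons m (k' : seq int) (c d : int) A : size k' = m ->
  ms m.+1 (rcons (rcons k' c) d) A =
  ms m (rcons k' c) (fun l => isum (c + 1) d (fun x => A (rcons l x))) +
  ms m (rcons k' (c - 1)) (fun l => A (rcons l c)).
Proof.
move=> hs /=.
have e1 : take m.+1 (rcons (rcons k' c) d) = rcons k' c.
  by rewrite -!cats1 -catA take_cat hs ltnNge leqnSn /= subSnn.
have e2 : take m (rcons (rcons k' c) d) = k'.
  by rewrite -!cats1 -catA take_cat hs ltnn subnn take0 cats0.
have e3 : nth 0 (rcons (rcons k' c) d) m = c.
  by rewrite -!cats1 -catA nth_cat hs ltnn subnn.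
have e4 : nth 0 (rcons (rcons k' c) d) m.+1 = d.
  by rewrite -!cats1 -catA nth_cat hs ltnNge leqnSn /= subSnn.
by rewrite e1 e2 e3 e4.
Qed.

End MS.

Section Main.
Variable C : numFieldType.

Lemma AS_add (f g : int -> int -> C) : AS f -> AS g -> AS (fun u v => f u v + g u v).
Proof. move=> hf hg u v; have := hf u v; have := hg u v; rewrite /G => e1 e2.
rewrite -[RHS](addr0 0); rewrite -{1}e1 -e2; ring. Qed.

Lemma AS_isum (c d : int) (F : int -> int -> int -> C) : (forall x, AS (F x)) ->
  AS (fun u v => isum c d (fun x => F x u v)).
Proof.
move=> h u v; rewrite /G -!isumD -!isumB -isumD.
rewrite (@isum_eq _ _ _ _ (fun _ => 0)) ?isum0 // => x.
by have := h x u v; rewrite /G.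
Qed.

Lemma AS_ms m K (B : seq int -> int -> int -> C) :
  (forall l, size l = m -> AS (B l)) -> AS (fun u v => ms m K (fun l => B l u v)).
Proof.
move=> h u v; rewrite /G -!msD -!msB -msD.
rewrite (@ms_ext _ _ _ _ (fun _ => 0)) ?ms0 // => l hl.
by have := h l hl u v; rewrite /G.
Qed.

Lemma dif_ms m (K3 : seq int) (e c : int) (B : seq int -> C) : size K3 = m ->
  ms m.+1 (rcons (rcons K3 e) c) B - ms m.+1 (rcons (rcons K3 e) (c - 1)) B =
  ms m (rcons K3 e) (fun l => B (rcons l c)).
Proof.
move=> hs; rewrite !ms_rcons // opprD addrACA subrr addr0 -msB; apply: ms_ext => l _.
by rewrite (isum_recr' _ c) addrC addKr.
Qed.

Definition hypAS n (A : seq int -> C) :=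
  forall l i, size l = n -> (i.+1 < n)%N -> AS (fun u v => A (upd2 l i u v)).

Lemma hyp_last m A (hA : hypAS m.+2 A) (l : seq int) : size l = m ->
  AS (fun c x => A (rcons (rcons l c) x)).
Proof.
move=> hs; have := hA (rcons (rcons l 0) 0) m; rewrite !size_rcons hs => /(_ erefl (ltnSn _)).
by apply: AS_ext => u v; rewrite upd2_last.
Qed.

Lemma hyp_last3 m A (hA : hypAS m.+3 A) (l : seq int) x : size l = m ->
  AS (fun c y => A (rcons (rcons (rcons l c) y) x)).
Proof.
move=> hs; have := hA (rcons (rcons (rcons l 0) 0) x) m; rewrite !size_rcons hs.
move=> /(_ erefl (ltn_trans (ltnSn _) (ltnSn _))).
apply: AS_ext => u v; rewrite -upd2_rcons ?upd2_last // !size_rcons hs //.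
Qed.

Lemma difD_AS m A (hA : hypAS m.+1 A) (k' : seq int) : size k' = m ->
  AS (dif (fun c x => ms m (rcons k' c) (fun l => A (rcons l x)))).
Proof.
case: m hA k' => [|m'] hA k' hs.
  apply: (@AS_ext C (fun _ _ => 0) _ _ (@AS0 C)) => u v; by rewrite /dif /= subrr.
have e : k' = rcons (take m' k') (nth 0 k' m') by rewrite -take_nth ?hs // take_oversize ?hs.
have hs' : size (take m' k') = m' by rewrite size_takel // hs.
apply: (AS_ext (f := fun c x => ms m' (rcons (take m' k') (nth 0 k' m')) (fun l => A (rcons (rcons l c) x)))).
  by move=> u v; rewrite /dif [in RHS]e dif_ms.
apply: AS_ms => l hl; exact: (hyp_last hA hl).
Qed.

Lemma caseLast m A (hA : hypAS m.+1 A) (k : seq int) : size k = m.+2 ->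
  AS (fun u v => ms m.+1 (upd2 k m u v) A).
Proof.
move=> hk.
have hk' : size (take m k) = m by rewrite size_takel // hk; lia.
apply: (AS_ext (f := S (fun c x => ms m (rcons (take m k) c) (fun l => A (rcons l x))))).
  move=> u v; rewrite [in RHS](decomp2 hk) upd2_last // ms_rcons // ms_isum //.
exact: LP (difD_AS hA hk').
Qed.

Lemma decomp3 (k : seq int) m : size k = m.+3 ->
  k = rcons (rcons (rcons (take m k) (nth 0 k m)) (nth 0 k m.+1)) (nth 0 k m.+2).
Proof.
move=> hs; rewrite -!take_nth ?hs ?take_oversize ?hs //; lia.
Qed.

Lemma caseMid m A (hA : hypAS m.+2 A) (k : seq int) : size k = m.+3 ->
  AS (fun u v => ms m.+2 (upd2 k m u v) A).
Proof.
move=> hk; set k'' := take m k; set b := nth 0 k m.+2.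
have hk'' : size k'' = m by rewrite /k'' size_takel // hk; lia.
pose W c y x := ms m (rcons k'' c) (fun l => A (rcons (rcons l y) x)).
have h1 : forall c, AS (W c).
  move=> c; rewrite /W; apply: (@AS_ms m (rcons k'' c) (fun l y x => A (rcons (rcons l y) x))) => l hl.
  by have := hyp_last hA hl.
have h2 : forall x, AS (dif (fun c y => W c y x)).
  move=> x; case: m hA k hk @k'' @b hk'' @W h1 => [|m'] hA k hk k'' b hk'' W h1.
    by apply: (@AS_ext C (fun _ _ => 0) _ _ (@AS0 C)) => u v; rewrite /dif /W /= subrr.
  have e : k'' = rcons (take m' k'') (nth 0 k'' m').
    by rewrite -take_nth ?hk'' // take_oversize ?hk''.
  have hs' : size (take m' k'') = m' by rewrite size_takel // hk''.
  apply: (AS_ext (f := fun c y => ms m' (rcons (take m' k'') (nth 0 k'' m'))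
            (fun l => A (rcons (rcons (rcons l c) y) x)))).
    by move=> u v; rewrite /dif /W [in RHS]e dif_ms.
  apply: (@AS_ms m' _ (fun l c y => A (rcons (rcons (rcons l c) y) x))) => l hl.
  by have := hyp_last3 hA x hl.
apply: (AS_ext (f := fun u v => Fm W b u v)); last exact: Mid h1 h2 b.
move=> u v.
have hk2 : size (rcons k'' u) = m.+1 by rewrite size_rcons hk''.
rewrite [in RHS](decomp3 hk) -/k'' -/b -upd2_rcons ?size_rcons ?hk'' // upd2_last //.
have msE : forall c x, ms m.+1 (rcons (rcons k'' u) c) (fun l => A (rcons l x)) = E W u c x.
  by move=> c x; rewrite ms_rcons // ms_isum.
rewrite ms_rcons // ms_isum msE.
by rewrite (@isum_eq _ _ _ _ (fun x => E W u v x)).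
Qed.

Lemma caseLow m A (hA : hypAS m.+1 A)
  (IH : forall A', hypAS m A' -> forall k i, size k = m.+1 -> (i < m)%N ->
          AS (fun u v => ms m (upd2 k i u v) A'))
  (k : seq int) i : size k = m.+2 -> (i.+1 < m)%N ->
  AS (fun u v => ms m.+1 (upd2 k i u v) A).
Proof.
move=> hk hi.
pose B1 := fun l => isum (nth 0 k m + 1) (nth 0 k m.+1) (fun x => A (rcons l x)).
pose B2 := fun l => A (rcons l (nth 0 k m)).
have hB1 : hypAS m B1.
  move=> l j hl hj; rewrite /B1.
  apply: (AS_ext (f := fun u v => isum (nth 0 k m + 1) (nth 0 k m.+1)
             (fun x => A (upd2 (rcons l x) j u v)))).
    by move=> u v; apply: isum_eq => x; rewrite upd2_rcons // hl; lia.
  apply: (@AS_isum _ _ (fun x u v => A (upd2 (rcons l x) j u v))) => x.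
  apply: hA; rewrite ?size_rcons ?hl //; lia.
have hB2 : hypAS m B2.
  move=> l j hl hj; rewrite /B2.
  apply: (AS_ext (f := fun u v => A (upd2 (rcons l (nth 0 k m)) j u v))).
    by move=> u v; rewrite upd2_rcons // hl; lia.
  apply: hA; rewrite ?size_rcons ?hl //; lia.
have s1 : size (take m.+1 k) = m.+1 by rewrite size_takel // hk.
have s2 : size (rcons (take m k) (nth 0 k m - 1)) = m.+1.
  by rewrite size_rcons size_takel // hk; lia.
have hi' : (i < m)%N by lia.
apply: (AS_ext (f := fun u v => ms m (upd2 (take m.+1 k) i u v) B1 +
   ms m (upd2 (rcons (take m k) (nth 0 k m - 1)) i u v) B2)); last first.
  exact: AS_add (IH _ hB1 _ _ s1 hi') (IH _ hB2 _ _ s2 hi').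
move=> u v /=.
have hki : (i.+1 < size k)%N by rewrite hk; lia.
rewrite !nth_upd2 //.
rewrite (_ : (m == i) = false); last by apply/negbTE; rewrite neq_ltn; apply/orP; right; lia.
rewrite (_ : (m == i.+1) = false); last by apply/negbTE; rewrite neq_ltn; apply/orP; right; lia.
rewrite (_ : (m.+1 == i) = false); last by apply/negbTE; rewrite neq_ltn; apply/orP; right; lia.
rewrite (_ : (m.+1 == i.+1) = false); last by apply/negbTE; rewrite neq_ltn; apply/orP; right; lia.
rewrite take_upd2 ?hk //; try lia.
rewrite take_upd2 ?hk //; try lia.
rewrite upd2_rcons // size_takel ?hk //; lia.
Qed.

Lemma mainAS n : forall A, hypAS n A -> forall k i, size k = n.+1 -> (i < n)%N ->
  AS (fun u v => ms n (upd2 k i u v) A).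
Proof.
elim: n => [|m IH] A hA k i hk hi //.
case: (ltngtP i.+1 m) => h.
- by have := caseLow hA IH hk h.
- have -> : i = m by lia.
  by have := caseLast hA hk.
- subst m; by have := caseMid hA hk.
Qed.

End Main.

Section Final.
Variable C : numFieldType.

Lemma set_upd2_1 (k : seq int) i (x y z : int) : set_nth 0 (upd2 k i x y) i.+1 z = upd2 k i x z.
Proof. by rewrite /upd2 set_set_nth eqxx. Qed.

Lemma set_upd2_0 (k : seq int) i (x y z : int) : set_nth 0 (upd2 k i x y) i z = upd2 k i z y.
Proof.
rewrite /upd2 set_set_nth (gtn_eqF (ltnSn i)).
by rewrite [set_nth 0 (set_nth 0 k i x) i z]set_set_nth eqxx.
Qed.

Lemma Tp_slice (F : seq int -> C) (k : seq int) i : (i.+1 < size k)%N ->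
  Tp i i.+1 F k = G (fun u v => F (upd2 k i u v)) (nth 0 k i) (nth 0 k i.+1) +
                  G (fun u v => F (upd2 k i u v)) (nth 0 k i.+1) (nth 0 k i).
Proof.
move=> h.
have Hv : forall x y, F (upd2 k i x y) + Eop i.+1 (Dop i F) (upd2 k i x y) =
                      G (fun u v => F (upd2 k i u v)) x y.
  move=> x y; rewrite /Eop /Dop /Eop /G.
  rewrite set_upd2_1 nth_upd2 // eqxx (_ : (i.+1 == i) = false) ?gtn_eqF //.
  rewrite nth_upd2 // eqxx set_upd2_0; ring.
rewrite /Tp /Sop /swapl.
rewrite -(Hv (nth 0 k i) (nth 0 k i.+1)) -(Hv (nth 0 k i.+1) (nth 0 k i)) upd2_id //.
Qed.

Lemma ms_msum m (k : seq int) (A : seq int -> C) : (0 < m)%N -> msum m k A = ms m k A.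
Proof.
elim: m k A => [//|m IH] k A _.
case: m IH => [|m] IH.
  rewrite /= (isum_recl (nth 0 k 0)) addrC //.
have -> : msum m.+2 k A = msum m.+1 (take m.+2 k)
   (fun l => isum (nth 0 k m.+1 + 1) (nth 0 k m.+2) (fun x => A (rcons l x))) +
   msum m.+1 (rcons (take m.+1 k) (nth 0 k m.+1 - 1)) (fun l => A (rcons l (nth 0 k m.+1))).
  by [].
by rewrite !IH.
Qed.

End Final.

Unset Implicit Arguments.
Set Strict Implicit.
(* Coordinates are 0-based: the paper's T'_{l_i,l_{i+1}} (1 <= i) is Tp (i-1) i. *)
Theorem corollary1 (R : realType) (n : nat) (A : seq int -> R[i]) :
  (1 <= n)%N ->
  (forall (i : nat) (l : seq int), size l = n -> (i.+1 < n)%N ->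
     Tp i i.+1 A l = 0) ->
  forall (i : nat) (k : seq int), size k = n.+1 -> (i < n)%N ->
    Tp i i.+1 (fun k' => msum n k' A) k = 0.
Proof.
move=> hn hA i k hk hi.
have hA' : hypAS n A.
  move=> l j hl hj u v.
  have hs : size (upd2 l j u v) = n by rewrite size_upd2 // hl.
  have := hA j (upd2 l j u v) hs hj.
  have e1 : nth 0 (upd2 l j u v) j = u by rewrite nth_upd2 ?hl // eqxx.
  have e2 : nth 0 (upd2 l j u v) j.+1 = v by rewrite /upd2 nth_set_nth /= eqxx.
  rewrite Tp_slice ?hs // e1 e2.
  have e : forall x y, upd2 (upd2 l j u v) j x y = upd2 l j x y by move=> x y; rewrite upd2_upd2 ?hl.
  by rewrite /G !e.
rewrite Tp_slice ?hk //.
have := mainAS hA' hk hi (nth 0 k i) (nth 0 k i.+1).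
by rewrite /G !ms_msum.
Qed.
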